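(* The $\alpha$-expansion algorithm provides no approximation guarantee better than $\frac12$ for the clique inference problem, even for the homogeneous Potts clique potential $C(\mathbf{v})=\lambda\sum_v n_v(\mathbf{v})^2$ with nonnegative vertex potentials: for every $\varepsilon>0$ there is such an instance (with $\lambda=1$) and an assignment $\tilde{\mathbf{v}}$ which is locally optimal with respect to every $\alpha$-expansion move (so that $\alpha$-expansion terminates at $\tilde{\mathbf{v}}$ when started from it) with $F(\tilde{\mathbf{v}})\le(\frac12+\varepsilon)\max_{\mathbf{v}}F(\mathbf{v})$.
   Context: Clique inference problem: there are $n$ vertices $1,\dots,n$, a finite set $V$ of values, real vertex potentials $\psi_{jv}$, and a clique potential $C$ depending only on the counts $n_v(\mathbf{v})=|\{j:v_j=v\}|$; the objective is $F(\mathbf{v})=\sum_{j}\psi_{jv_j}+C(\mathbf{v})$ over $\mathbf{v}\in V^n$. An $\alpha$-expansion move from an assignment $\tilde{\mathbf{v}}$ (for $\alpha\in V$) replaces $\tilde{\mathbf{v}}$ by an assignment maximizing $F$ among all assignments obtained from $\tilde{\mathbf{v}}$ by switching some subset of vertices to the value $\alpha$ (other vertices keep their values). The $\alpha$-expansion algorithm starts from an initial assignment (e.g. all vertices assigned the first value) and repeatedly performs optimal $\alpha$-expansion moves for each $\alpha\in V$ in turn, stopping when in a full round over all values no vertex changes its value. *)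

(* Defs.v *)
From mathcomp Require Import all_boot all_order all_algebra.
From mathcomp Require Import reals.
Set Implicit Arguments. Unset Strict Implicit. Unset Printing Implicit Defensive.
Import Order.TTheory GRing.Theory Num.Theory.
Local Open Scope ring_scope.

Definition assignment (n : nat) (V : finType) := {ffun 'I_n -> V}.

Definition nval (n : nat) (V : finType) (x : assignment n V) (v : V) : nat :=
  #|[set j | x j == v]|.

Definition potts (R : realType) (lambda : R) (n : nat) (V : finType)
  (x : assignment n V) : R :=
  lambda * \sum_(v : V) ((nval x v)%:R ^+ 2).

Definition objF (R : realType) (n : nat) (V : finType) (psi : 'I_n -> V -> R)
  (C : assignment n V -> R) (x : assignment n V) : R :=
  \sum_(j < n) psi j (x j) + C x.

Definition expansion_of (n : nat) (V : finType) (x : assignment n V) (alpha : V)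
  (y : assignment n V) : Prop :=
  forall j, y j = x j \/ y j = alpha.

Definition expansion_locally_optimal (R : realType) (n : nat) (V : finType)
  (psi : 'I_n -> V -> R) (C : assignment n V -> R) (x : assignment n V) : Prop :=
  forall (alpha : V) (y : assignment n V),
    expansion_of x alpha y -> objF psi C y <= objF psi C x.

(* Main.v *)
Require Import Defs.
From mathcomp Require Import all_boot all_order all_algebra.
From mathcomp Require Import reals zify ring lra.
Import Order.TTheory GRing.Theory Num.Theory.
Set Implicit Arguments. Unset Strict Implicit.

Definition pn (n : nat) (j : 'I_n) (v : option 'I_n) : nat :=
  match v with None => 2 | Some i => if i == j then 2 * n else 0 end.

Definition Nn (n : nat) (y : assignment n (option 'I_n)) : nat :=
  \sum_(j < n) pn j (y j) + \sum_(v : option 'I_n) (nval y v) ^ 2.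

Lemma Nn_formula n (i : 'I_n) (y : assignment n (option 'I_n)) :
  (forall j, y j = None \/ y j = Some i) ->
  Nn y = 2 * (n - #|[set j | y j == Some i]|)
         + (if y i == Some i then 2 * n else 0)
         + (n - #|[set j | y j == Some i]|) ^ 2 + #|[set j | y j == Some i]| ^ 2.
Proof.
move=> hy; set S := [set j | y j == Some i].
have hC : [set j | y j == None] = ~: S.
  apply/setP => j; rewrite !inE; case: (hy j) => ->; by rewrite ?eqxx.
have hk : (#|S| + #|~: S| = n)%N by rewrite cardsC card_ord.
have hN : nval y None = (n - #|S|)%N by rewrite /nval hC; lia.
have hS : nval y (Some i) = #|S| by [].
have hcl : \sum_(v : option 'I_n) (nval y v) ^ 2 = ((n - #|S|) ^ 2 + #|S| ^ 2)%N.
  rewrite (bigD1 None) //= (bigD1 (Some i)) //= big1 ?hN ?hS ?addn0 //.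
  move=> v /andP [hv1 hv2]; rewrite /nval.
  suff -> : [set j | y j == v] = set0 by rewrite cards0.
  apply/setP => j; rewrite !inE; case: (hy j) => ->.
    by rewrite eq_sym (negbTE hv1).
  by rewrite eq_sym (negbTE hv2).
rewrite /Nn hcl (bigID (fun j => j \in S)) /=.
have -> : \sum_(j < n | j \notin S) pn j (y j) = (2 * (n - #|S|))%N.
  rewrite (eq_bigr (fun _ => 2%N)); last first.
    move=> j; rewrite inE; case: (hy j) => -> //=; by rewrite eqxx.
  rewrite sum_nat_const mulnC; congr (_ * _)%N.
  have h2 := cardC S; rewrite card_ord in h2.
  have -> : #|(fun i0 : 'I_n => i0 \notin S)| = #|[predC S]| by apply: eq_card => j; rewrite !inE.
  lia.
have -> : \sum_(j < n | j \in S) pn j (y j) = (if y i == Some i then 2 * n else 0)%N.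
  case: ifP => hi.
    rewrite (bigD1 i) ?inE //= (eqP hi) /= eqxx big1 ?addn0 //.
    move=> j /andP [hj hji]; move: hj; rewrite inE => /eqP -> /=.
    by rewrite eq_sym (negbTE hji).
  rewrite big1 // => j; rewrite inE => /eqP hj; rewrite hj /=.
  case: eqP => // eij; subst; by rewrite hj eqxx in hi.
by rewrite [_ + 2 * _]addnC !addnA.
Qed.

Local Open Scope ring_scope.

Lemma objF_nat (R : realType) n (y : assignment n (option 'I_n)) :
  objF (fun j v => ((pn j v)%:R : R)) (@potts R 1 n _) y = (Nn y)%:R.
Proof.
rewrite /objF /potts /Nn mul1r natrD !natr_sum; congr (_ + _).
by apply: eq_bigr => v _; rewrite natrX.
Qed.

Lemma Nn_x n (i : 'I_n) : Nn ([ffun _ => None] : assignment n (option 'I_n)) = (2 * n + n ^ 2)%N.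
Proof.
rewrite (@Nn_formula n i); last by move=> j; left; rewrite ffunE.
have -> : [set j | [ffun _ => None] j == Some i] = set0 :> {set 'I_n}.
  by apply/setP => j; rewrite !inE ffunE.
by rewrite cards0 ffunE /= subn0 !addn0.
Qed.

Lemma Nn_le n (i : 'I_n) (y : assignment n (option 'I_n)) :
  (forall j, y j = None \/ y j = Some i) -> (Nn y <= 2 * n + n ^ 2)%N.
Proof.
move=> hy; rewrite (Nn_formula hy).
have hk : (#|[set j | y j == Some i]| <= n)%N.
  by rewrite -[X in (_ <= X)%N](card_ord n) max_card.
case: ifP => hi.
  have hk1 : (0 < #|[set j | y j == Some i]|)%N.
    by apply/card_gt0P; exists i; rewrite inE.
  move: hk hk1; set k := #|_|; move=> hk hk1; nia.
move: hk; set k := #|_|; move=> hk; nia.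
Qed.

Theorem theorem6 (R : realType) (eps : R) :
  0 < eps ->
  exists (n : nat) (V : finType) (psi : 'I_n -> V -> R) (x : assignment n V),
    [/\ (0 < n)%N,
        (forall j v, 0 <= psi j v),
        expansion_locally_optimal psi (@potts R 1 n V) x &
        exists vstar : assignment n V,
          (forall y : assignment n V,
             objF psi (@potts R 1 n V) y <= objF psi (@potts R 1 n V) vstar) /\
          objF psi (@potts R 1 n V) x
            <= (2^-1 + eps) * objF psi (@potts R 1 n V) vstar].
Proof.
move=> he.
set n := Num.Def.archi_bound (eps^-1).
have hb : eps^-1 < n%:R by apply: archi_boundP; rewrite invr_ge0 ltW.
have hn : (0 < n)%N by rewrite -(ltr0n R); apply: lt_trans hb; rewrite invr_gt0.
pose i0 : 'I_n := Ordinal hn.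
pose x : assignment n (option 'I_n) := [ffun _ => None].
exists n, (option 'I_n), (fun j v => ((pn j v)%:R : R)), x.
split => //.
- move=> alpha y hy; rewrite !objF_nat ler_nat (Nn_x i0).
  case: alpha hy => [i|] hy.
    by apply: (@Nn_le n i) => j; case: (hy j) => ->; [left; rewrite ffunE|right].
  apply: (@Nn_le n i0) => j; left; by case: (hy j) => ->; rewrite ?ffunE.
pose F := fun y : assignment n (option 'I_n) => objF (fun j v => ((pn j v)%:R : R)) (@potts R 1 n _) y.
exists [arg max_(y > x) F y]%O.
case: (@Order.TotalTheory.arg_maxP _ _ _ x xpredT F isT) => vs _ hvs.
split; first by move=> y; apply: hvs.
pose z : assignment n (option 'I_n) := [ffun j => Some j].
have hz : (2 * n * n <= Nn z)%N.
  rewrite /Nn; apply: leq_trans (leq_addr _ _).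
  rewrite (eq_bigr (fun _ => (2 * n)%N)); last by move=> j _; rewrite ffunE /= eqxx.
  by rewrite sum_nat_const card_ord mulnC.
have hFz : (2 * n * n)%:R <= F vs.
  apply: le_trans (hvs z isT); rewrite /F objF_nat ler_nat //.
move: hFz; rewrite /F /x !objF_nat (Nn_x i0).
set Fv := ((Nn vs)%:R : R).
rewrite !(natrD, natrM, natrX).
set N := (n%:R : R); move=> hFz.
have hN : 1 <= eps * N.
  have hv : eps * eps^-1 = 1 by rewrite mulfV // lt0r_neq0.
  nra.
have hN0 : 0 <= N by rewrite ler0n.
have hp : 0 <= 2^-1 + eps :> R by apply: addr_ge0 => //; rewrite ?invr_ge0 ?ltW.
have a := ler_wpM2l hp hFz.
have b : N * 1 <= N * (eps * N) by apply: ler_wpM2l.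
apply: le_trans a.
have h2 : (2 : R)^-1 * 2 = 1 by rewrite mulVf // pnatr_eq0.
have c : (2^-1 + eps) * (2 * N * N) = (2^-1 * 2) * (N * N) + 2 * (N * (eps * N)) by ring.
rewrite c h2 mul1r expr2; rewrite mulr1 in b.
lra.
Qed.
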